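(* Let $\mathcal D$ be an (extremal epi, mono) category. Then there is a faithful functor $R\colon\mathcal P(\mathcal D)\to\mathcal Q(\mathcal D)$ which is the identity on underlying objects and morphisms of $\mathcal D$, given on objects by $R(d,F)=(d,\hat F)$ where $\hat F$ is the saturation of the class of extremal epimorphisms $e_\phi$ appearing in (extremal epi, mono)-factorisations $\phi=m_\phi e_\phi$ of the elements $\phi\in F$. Moreover $R\circ I=\mathrm{id}_{\mathcal Q(\mathcal D)}$, where $I\colon\mathcal Q(\mathcal D)\to\mathcal P(\mathcal D)$ is the inclusion, and $R$ is right adjoint to $I$.
   Context: For a category $\mathcal D$ and an object $d$, $M(d)$ denotes the class of all morphisms of $\mathcal D$ with source $d$, quasi-ordered by $\phi_1\ge\phi_2$ iff there is a morphism $h$ with $h\phi_1=\phi_2$. A projective filtration on $d$ is a non-empty, directed, saturated subclass $F\subseteq M(d)$ (saturated: $\phi_1\in F$ and $\phi_1\ge\phi_2$ imply $\phi_2\in F$). For a non-empty directed subclass $S\subseteq M(d)$, its saturation is $\{\psi\in M(d):\psi\le\phi\text{ for some }\phi\in S\}$. A subclass $S\subseteq F$ is initial if every $\phi\in F$ satisfies $\phi\le\psi$ for some $\psi\in S$. For $f\colon d'\to d$, the pull back $f^*(F)$ is $\{\phi f:\phi\in F\}$. The category $\mathcal P(\mathcal D)$ has objects pairs $(d,F)$ with $F$ a projective filtration on $d$; a morphism $(d_1,F_1)\to(d_2,F_2)$ is a morphism $f\colon d_1\to d_2$ of $\mathcal D$ with $f^*(F_2)\subseteq F_1$. A projective filtration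 is reduced if it has an initial subclass consisting of extremal epimorphisms; $\mathcal Q(\mathcal D)$ is the full subcategory of $\mathcal P(\mathcal D)$ on objects $(d,F)$ with $F$ reduced. An (extremal epi, mono) category is one in which every morphism factors as an extremal epimorphism followed by a monomorphism and such factorisations have the unique diagonal fill-in property. *)

(* Defs.v *)
From Stdlib Require Import ProofIrrelevance.

Set Implicit Arguments.

Record Category := {
  Ob :> Type;
  Hom : Ob -> Ob -> Type;
  idm : forall a, Hom a a;
  comp : forall a b c, Hom b c -> Hom a b -> Hom a c;
  comp_id_l : forall a b (f : Hom a b), comp (idm b) f = f;
  comp_id_r : forall a b (f : Hom a b), comp f (idm a) = f;
  comp_assoc : forall a b c d (f : Hom a b) (g : Hom b c) (h : Hom c d),
      comp h (comp g f) = comp (comp h g) f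
}.
Arguments Hom {c0} _ _.
Arguments idm {c0} _.
Arguments comp {c0 _ _ _} _ _.

Notation "g ⊚ f" := (comp g f) (at level 40, left associativity).

Record Functor (C D : Category) := {
  fobj :> C -> D;
  fmap : forall a b, Hom a b -> Hom (fobj a) (fobj b);
  fmap_id : forall a, fmap a a (idm a) = idm (fobj a);
  fmap_comp : forall a b c (f : Hom a b) (g : Hom b c),
      fmap a c (g ⊚ f) = fmap b c g ⊚ fmap a b f
}.
Arguments fobj {C D} _ _.
Arguments fmap {C D} _ {a b} _.

Definition Faithful (C D : Category) (F : Functor C D) : Prop :=
  forall a b (f g : Hom a b), fmap F f = fmap F g -> f = g.

Definition Adjunction (C D : Category) (L : Functor C D) (R : Functor D C) : Prop :=
  exists (phi : forall (c : C) (d : D), Hom (fobj L c) d -> Hom c (fobj R d))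
         (psi : forall (c : C) (d : D), Hom c (fobj R d) -> Hom (fobj L c) d),
    (forall c d f, psi c d (phi c d f) = f) /\
    (forall c d g, phi c d (psi c d g) = g) /\
    (forall (c c' : C) (d d' : D) (h : Hom c' c) (k : Hom d d')
            (f : Hom (fobj L c) d),
        phi c' d' (k ⊚ f ⊚ fmap L h) = fmap R k ⊚ phi c d f ⊚ h).

Section Morphisms.
Context {C : Category}.

Definition Mono {a b : C} (m : Hom a b) : Prop :=
  forall (x : C) (g h : Hom x a), m ⊚ g = m ⊚ h -> g = h.

Definition Epi {a b : C} (e : Hom a b) : Prop :=
  forall (x : C) (g h : Hom b x), g ⊚ e = h ⊚ e -> g = h.

Definition IsIso {a b : C} (f : Hom a b) : Prop :=
  exists g : Hom b a, g ⊚ f = idm a /\ f ⊚ g = idm b.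

Definition ExtremalEpi {a b : C} (e : Hom a b) : Prop :=
  Epi e /\
  forall (c : C) (g : Hom a c) (m : Hom c b), Mono m -> e = m ⊚ g -> IsIso m.

Definition EMCategory_ : Prop :=
  (forall (a b : C) (f : Hom a b),
      exists (c : C) (e : Hom a c) (m : Hom c b),
        ExtremalEpi e /\ Mono m /\ f = m ⊚ e) /\
  (forall (a b c d : C) (e : Hom a b) (m : Hom c d) (u : Hom a c) (v : Hom b d),
      ExtremalEpi e -> Mono m -> v ⊚ e = m ⊚ u ->
      exists! t : Hom b c, t ⊚ e = u /\ m ⊚ t = v).

Definition MClass (d : C) := forall c : C, Hom d c -> Prop.

Definition geqM {d c1 c2 : C} (phi1 : Hom d c1) (phi2 : Hom d c2) : Prop :=
  exists h : Hom c1 c2, h ⊚ phi1 = phi2.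

Definition NonEmpty {d : C} (F : MClass d) : Prop :=
  exists (c : C) (phi : Hom d c), F c phi.

Definition Directed {d : C} (F : MClass d) : Prop :=
  forall (c1 : C) (phi1 : Hom d c1) (c2 : C) (phi2 : Hom d c2),
    F c1 phi1 -> F c2 phi2 ->
    exists (c : C) (psi : Hom d c), F c psi /\ geqM psi phi1 /\ geqM psi phi2.

Definition Saturated {d : C} (F : MClass d) : Prop :=
  forall (c1 : C) (phi1 : Hom d c1) (c2 : C) (phi2 : Hom d c2),
    F c1 phi1 -> geqM phi1 phi2 -> F c2 phi2.

Definition ProjFilt {d : C} (F : MClass d) : Prop :=
  NonEmpty F /\ Directed F /\ Saturated F.

Definition saturation {d : C} (S : MClass d) : MClass d :=
  fun c psi => exists (c' : C) (phi : Hom d c'), S c' phi /\ geqM phi psi.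

Definition SubClass {d : C} (S F : MClass d) : Prop :=
  forall (c : C) (phi : Hom d c), S c phi -> F c phi.

Definition Initial {d : C} (S F : MClass d) : Prop :=
  SubClass S F /\
  forall (c : C) (phi : Hom d c), F c phi ->
    exists (c' : C) (psi : Hom d c'), S c' psi /\ geqM psi phi.

Definition Reduced {d : C} (F : MClass d) : Prop :=
  exists S : MClass d, Initial S F /\
    forall (c : C) (phi : Hom d c), S c phi -> ExtremalEpi phi.

Definition pullback {d' d : C} (f : Hom d' d) (F : MClass d) : MClass d' :=
  fun c psi => exists phi : Hom d c, F c phi /\ psi = phi ⊚ f.

End Morphisms.
Definition EMCategory (C : Category) : Prop := @EMCategory_ C.

Record PObj (C : Category) := {
  pd : C;
  pF : MClass pd;
  pF_ok : ProjFilt pF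
}.
Arguments pd {C} _.
Arguments pF {C} _ _ _.

Definition PHom (C : Category) (X Y : PObj C) :=
  { f : Hom (pd X) (pd Y) | SubClass (pullback f (pF Y)) (pF X) }.

Lemma PHom_eq (C : Category) (X Y : PObj C) (f g : PHom X Y) :
  proj1_sig f = proj1_sig g -> f = g.
Proof.
  destruct f as [f Hf], g as [g Hg]; simpl; intros ->.
  f_equal; apply proof_irrelevance.
Qed.

Definition Pid (C : Category) (X : PObj C) : PHom X X.
Proof.
  exists (idm (pd X)).
  intros c psi [phi [Hphi ->]]. rewrite comp_id_r. exact Hphi.
Defined.

Definition Pcomp (C : Category) (X Y Z : PObj C) (g : PHom Y Z) (f : PHom X Y) :
  PHom X Z.
Proof.
  exists (proj1_sig g ⊚ proj1_sig f).
  destruct g as [g Hg], f as [f Hf]; simpl.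
  intros c psi [phi [Hphi ->]].
  rewrite comp_assoc. apply Hf. exists (phi ⊚ g). split; [|reflexivity].
  apply Hg. exists phi. split; [exact Hphi | reflexivity].
Defined.

Definition PCat (C : Category) : Category.
Proof.
  refine (@Build_Category (PObj C) (@PHom C) (@Pid C) (@Pcomp C) _ _ _);
    intros; apply PHom_eq; simpl.
  - apply comp_id_l.
  - apply comp_id_r.
  - apply comp_assoc.
Defined.

Definition QObj (C : Category) := { X : PObj C | Reduced (pF X) }.

Definition QCat (C : Category) : Category.
Proof.
  refine (@Build_Category (QObj C)
            (fun X Y => PHom (proj1_sig X) (proj1_sig Y))
            (fun X => Pid (proj1_sig X))
            (fun X Y Z g f => Pcomp g f) _ _ _);
    intros; apply PHom_eq; simpl.
  - apply comp_id_l.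
  - apply comp_id_r.
  - apply comp_assoc.
Defined.

Definition Incl (C : Category) : Functor (QCat C) (PCat C).
Proof.
  refine (@Build_Functor (QCat C) (PCat C) (fun X => proj1_sig X)
            (fun X Y f => f) _ _); reflexivity.
Defined.

Definition hatF (C : Category) (X : PObj C) : MClass (pd X) :=
  saturation (fun (c : C) (e : Hom (pd X) c) =>
    ExtremalEpi e /\
    exists (c' : C) (phi : Hom (pd X) c') (m : Hom c c'),
      pF X c' phi /\ Mono m /\ phi = m ⊚ e).

(* The assignment R(d,F) = (d, F-hat), identity on underlying morphisms,
   packaged as a functor from the facts that it is well defined. *)
Definition Robj (C : Category)
  (H1 : forall X : PObj C, ProjFilt (hatF X) /\ Reduced (hatF X))
  (X : PObj C) : QObj C :=
  exist _ (Build_PObj (proj1 (H1 X))) (proj2 (H1 X)).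

Definition mkR (C : Category)
  (H1 : forall X : PObj C, ProjFilt (hatF X) /\ Reduced (hatF X))
  (H2 : forall (X Y : PObj C) (f : PHom X Y),
          SubClass (pullback (proj1_sig f) (hatF Y)) (hatF X)) :
  Functor (PCat C) (QCat C).
Proof.
  refine (@Build_Functor (PCat C) (QCat C) (Robj H1)
            (fun X Y f => exist _ (proj1_sig f) (H2 X Y f)) _ _);
    intros; apply PHom_eq; reflexivity.
Defined.

(* Main.v *)
Require Import Defs.
From Stdlib Require Import ProofIrrelevance FunctionalExtensionality PropExtensionality.

Section S.
Variable C : Category.
Variable HC : EMCategory C.

Lemma fill (a b c d : C) (e : Hom a b) (m : Hom c d) (u : Hom a c) (v : Hom b d) :
  ExtremalEpi e -> Mono m -> v ⊚ e = m ⊚ u -> exists t : Hom b c, t ⊚ e = u.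
Proof.
  intros He Hm Heq. destruct (proj2 HC _ _ _ _ e m u v He Hm Heq) as [t [[H1 _] _]].
  eauto.
Qed.

Lemma fact (a b : C) (f : Hom a b) :
  exists (c : C) (e : Hom a c) (m : Hom c b), ExtremalEpi e /\ Mono m /\ f = m ⊚ e.
Proof. apply (proj1 HC). Qed.

Lemma F_in_hat (X : PObj C) c (phi : Hom (pd X) c) : pF X c phi -> hatF X c phi.
Proof.
  intros Hp. destruct (@fact _ _ phi) as [c' [e [m [He [Hm Heq]]]]].
  exists c', e. split.
  - split; [exact He|]. exists c, phi, m. auto.
  - exists m. symmetry; exact Heq.
Qed.

Lemma hat_in_F (X : PObj C) : Reduced (pF X) ->
  forall c (phi : Hom (pd X) c), hatF X c phi -> pF X c phi.
Proof.
  intros [S [[HSF HSi] HSe]] c psi [c1 [e [[He [c2 [phi [m [Hphi [Hm Heq]]]]]] Hge]]].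
  destruct (HSi _ _ Hphi) as [c3 [s [Hs [h Hh]]]].
  destruct (@fill _ _ _ _ s m e h (HSe _ _ Hs) Hm) as [t Ht].
  { rewrite Hh; exact Heq. }
  destruct X as [d F [Hn [Hd Hsat]]]; simpl in *.
  assert (F c1 e) by (apply (Hsat _ s); [apply HSF; exact Hs | exists t; exact Ht]).
  apply (Hsat _ e); assumption.
Qed.

Lemma H1 : forall X : PObj C, ProjFilt (hatF X) /\ Reduced (hatF X).
Proof.
  intros X. split; [split; [|split]|].
  - destruct (pF_ok X) as [[c [phi Hp]] _]. exists c, phi. apply F_in_hat; exact Hp.
  - intros c1 p1 c2 p2 [a1 [e1 [[He1 [b1 [q1 [m1 [Hq1 [Hm1 E1]]]]]] G1]]]
                      [a2 [e2 [[He2 [b2 [q2 [m2 [Hq2 [Hm2 E2]]]]]] G2]]].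
    destruct (pF_ok X) as [_ [Hd _]].
    destruct (Hd _ _ _ _ Hq1 Hq2) as [c [phi [Hp [[h1 Hh1] [h2 Hh2]]]]].
    destruct (@fact _ _ phi) as [c' [e [m [He [Hm Heq]]]]].
    exists c', e. split; [|split].
    + exists c', e. split; [split; [exact He| exists c, phi, m; auto]|exists (idm _); apply comp_id_l].
    + destruct (@fill _ _ _ _ e m1 e1 (h1 ⊚ m) He Hm1) as [t Ht].
      { rewrite <- comp_assoc, <- Heq, Hh1. exact E1. }
      destruct G1 as [g Hg]. exists (g ⊚ t). rewrite <- comp_assoc, Ht. exact Hg.
    + destruct (@fill _ _ _ _ e m2 e2 (h2 ⊚ m) He Hm2) as [t Ht].
      { rewrite <- comp_assoc, <- Heq, Hh2. exact E2. }
      destruct G2 as [g Hg]. exists (g ⊚ t). rewrite <- comp_assoc, Ht. exact Hg.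
  - intros c1 p1 c2 p2 [a [e [He [h Hh]]]] [g Hg].
    exists a, e. split; [exact He|]. exists (g ⊚ h). rewrite <- comp_assoc, Hh. exact Hg.
  - exists (fun (c : C) (e : Hom (pd X) c) => ExtremalEpi e /\
      exists (c' : C) (phi : Hom (pd X) c') (m : Hom c c'),
        pF X c' phi /\ Mono m /\ phi = m ⊚ e).
    split; [split|].
    + intros c e He. exists c, e. split; [exact He|exists (idm _); apply comp_id_l].
    + intros c psi [a [e [He Hg]]]. exists a, e. auto.
    + intros c e [He _]. exact He.
Qed.

Lemma H2 : forall (X Y : PObj C) (f : PHom X Y),
    SubClass (pullback (proj1_sig f) (hatF Y)) (hatF X).
Proof.
  intros X Y [f Hf] c psi' [psi [[a [e [[He [b [phi [m [Hphi [Hm Heq]]]]]] [h Hh]]]] ->]].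
  simpl. assert (Hpf : pF X b (phi ⊚ f)) by (apply Hf; exists phi; auto).
  destruct (@fact _ _ (phi ⊚ f)) as [c' [e' [m' [He' [Hm' Heq']]]]].
  destruct (@fill _ _ _ _ e' m (e ⊚ f) m' He' Hm) as [t Ht].
  { rewrite <- Heq', comp_assoc, <- Heq. reflexivity. }
  exists c', e'. split.
  - split; [exact He'|]. exists b, (phi ⊚ f), m'. auto.
  - exists (h ⊚ t). rewrite <- comp_assoc, Ht, comp_assoc, Hh. reflexivity.
Qed.

Lemma hat_eq (X : PObj C) : Reduced (pF X) -> hatF X = pF X.
Proof.
  intros Hr. apply functional_extensionality_dep; intro c.
  apply functional_extensionality; intro phi.
  apply propositional_extensionality; split.
  - apply hat_in_F; exact Hr.
  - apply F_in_hat.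
Qed.

End S.

Theorem mainTheorem3 (C : Category) (HC : EMCategory C) :
  exists (H1 : forall X : PObj C, ProjFilt (hatF X) /\ Reduced (hatF X))
         (H2 : forall (X Y : PObj C) (f : PHom X Y),
                 SubClass (pullback (proj1_sig f) (hatF Y)) (hatF X)),
    Faithful (mkR H1 H2) /\
    (forall Y : QObj C, fobj (mkR H1 H2) (fobj (Incl C) Y) = Y) /\
    Adjunction (Incl C) (mkR H1 H2).
Proof.
  exists (H1 C HC), (H2 C HC). split; [|split].
  - intros a b f g E. apply PHom_eq.
    apply (f_equal (fun x : PHom _ _ => proj1_sig x)) in E. exact E.
  - intros [X r]. simpl. unfold Robj.
    generalize (proj1 (H1 C HC X)) (proj2 (H1 C HC X)).
    destruct X as [d F ok]. simpl in *.
    rewrite (hat_eq C HC {| pd := d; pF := F; pF_ok := ok |} r).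
    intros p q. rewrite (proof_irrelevance _ p ok), (proof_irrelevance _ q r).
    reflexivity.
  - unshelve eexists.
    { intros c d [f Hf]. exists f. simpl.
      intros x psi [phi [Hphi ->]].
      destruct c as [Y r]; simpl in *.
      apply (hat_in_F C HC Y r).
      apply (H2 C HC Y d (exist _ f Hf)). exists phi; auto. }
    unshelve eexists.
    { intros c d [f Hf]. exists f. simpl in *.
      intros x psi [phi [Hphi ->]]. apply Hf. exists phi. split; [|reflexivity].
      apply (F_in_hat C HC); exact Hphi. }
    split; [|split].
    + intros c d [f Hf]. apply PHom_eq. reflexivity.
    + intros c d [f Hf]. apply PHom_eq. reflexivity.
    + intros c c' d d' h k f. apply PHom_eq. destruct f, h, k. reflexivity.
Qed.
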